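(* Consider a bipartite experiment where Alice chooses $x\in\{0,1\}$ and obtains $a\in\{\pm1\}$ with probability $\pi_{a|x}:=p(a|x)$, and conditioned on $(a,x)$ Bob's system is in the qubit state $\rho_{a|x}=\tfrac12(I+\mathbf s_{a|x}\cdot\boldsymbol\sigma)$ with Bloch vector $\mathbf s_{a|x}\in\mathbb R^3$, $\|\mathbf s_{a|x}\|\le1$. Bob chooses $y\in\{0,1\}$ and performs the binary projective measurement with observable $B_y=\mathbf b_y\cdot\boldsymbol\sigma$, $\|\mathbf b_y\|=1$, obtaining $b\in\{\pm1\}$, so that $p(a,b|x,y)=\pi_{a|x}\,\mathrm{Tr}\big(\rho_{a|x}\tfrac{I+bB_y}{2}\big)$. Let $E_{xy}=\sum_{a,b=\pm1}ab\,p(a,b|x,y)$ and $S_{\mathrm{CHSH}}=E_{00}+E_{01}+E_{10}-E_{11}$. For a pair of qubit states let the SWAP-test pass probability be $p(\mathsf{pass}|\rho,\sigma)=\tfrac12(1+\mathrm{Tr}(\rho\sigma))$, and define $$p_{\mathrm{pur}}^{\pm|x}=p(\mathsf{pass}|\rho_{\pm|x},\rho_{\pm|x}),\qquad p_{\mathrm{ov}}^{x}=p(\mathsf{pass}|\rho_{+|x},\rho_{-|x}),$$ $$\widetilde R_x^2:=2\Big[\pi_{+|x}^2(2p_{\mathrm{pur}}^{+|x}-1)+\pi_{-|x}^2(2p_{\mathrm{pur}}^{-|x}-1)-2\pi_{+|x}\pi_{-|x}(2p_{\mathrm{ov}}^{x}-1)\Big]-(\pi_{+|x}-\pi_{-|x})^2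 .$$ Then $$S_{\mathrm{CHSH}}\le 2\sqrt{\widetilde R_0^2+\widetilde R_1^2}.$$
   Context: $\boldsymbol\sigma=(\sigma_x,\sigma_y,\sigma_z)$ is the vector of Pauli matrices. $\widetilde R_x^2$ is called the weighted operational separation parameter of Bob's two conditional preparations at Alice's setting $x$. *)

(* Defs.v *)
From HB Require Import structures.
From mathcomp Require Import all_boot all_order all_algebra.
From mathcomp Require Import complex.
Set Implicit Arguments. Unset Strict Implicit. Unset Printing Implicit Defensive.
Import Order.TTheory GRing.Theory Num.Theory.
Local Open Scope ring_scope.

Section Qubit.
Variable R : rcfType.
Local Notation C := (complex R).

Definition cR (x : R) : C := Complex x 0.
Definition cI : C := Complex 0 1.

Definition sigma_x : 'M[C]_2 := \matrix_(i < 2, j < 2) if i == j then 0 else 1.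
Definition sigma_y : 'M[C]_2 :=
  \matrix_(i < 2, j < 2) if i == j then 0 else if (i : nat) == 0%N then - cI else cI.
Definition sigma_z : 'M[C]_2 :=
  \matrix_(i < 2, j < 2) if i == j then (if (i : nat) == 0%N then 1 else -1) else 0.
Definition pauli (k : 'I_3) : 'M[C]_2 :=
  if (k : nat) == 0%N then sigma_x else if (k : nat) == 1%N then sigma_y else sigma_z.

Definition dot_sigma (v : 'rV[R]_3) : 'M[C]_2 := \sum_(k < 3) cR (v ord0 k) *: pauli k.

Definition sqnorm3 (v : 'rV[R]_3) : R := \sum_(k < 3) v ord0 k ^+ 2.

Definition bloch_state (s : 'rV[R]_3) : 'M[C]_2 := cR (2^-1) *: (1%:M + dot_sigma s).

(* outcome +1 encoded by true, -1 by false *)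
Definition sgnb (b : bool) : R := if b then 1 else -1.

(* Real part of the trace (the traces below are real) *)
Definition retr (M : 'M[C]_2) : R := complex.Re (\tr M).

Definition pjoint (pi : bool -> bool -> R) (s : bool -> bool -> 'rV[R]_3)
  (bv : bool -> 'rV[R]_3) (a b x y : bool) : R :=
  pi x a * retr (bloch_state (s x a) *m (cR (2^-1) *: (1%:M + cR (sgnb b) *: dot_sigma (bv y)))).

Definition corrE pi s bv (x y : bool) : R :=
  \sum_(a : bool) \sum_(b : bool) sgnb a * sgnb b * pjoint pi s bv a b x y.

(* x = 0 encoded by false, x = 1 by true *)
Definition S_CHSH pi s bv : R :=
  corrE pi s bv false false + corrE pi s bv false true
  + corrE pi s bv true false - corrE pi s bv true true.

Definition ppass (rho sig : 'M[C]_2) : R := (1 + retr (rho *m sig)) / 2.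

Definition ppur (s : bool -> bool -> 'rV[R]_3) (a x : bool) : R :=
  ppass (bloch_state (s x a)) (bloch_state (s x a)).
Definition pov (s : bool -> bool -> 'rV[R]_3) (x : bool) : R :=
  ppass (bloch_state (s x true)) (bloch_state (s x false)).

Definition Rt2 (pi : bool -> bool -> R) (s : bool -> bool -> 'rV[R]_3) (x : bool) : R :=
  2 * (pi x true ^+ 2 * (2 * ppur s true x - 1) + pi x false ^+ 2 * (2 * ppur s false x - 1)
       - 2 * pi x true * pi x false * (2 * pov s x - 1))
  - (pi x true - pi x false) ^+ 2.

End Qubit.

(* Main.v *)
Require Import Defs.
From HB Require Import structures.
From mathcomp Require Import all_boot all_order all_algebra.
From mathcomp Require Import complex ring lra.
Import Order.TTheory GRing.Theory Num.Theory.
Local Open Scope ring_scope.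
Section S.
Variable R : rcfType.
Notation C := (complex R).
Lemma sum3 (V : nmodType) (F : 'I_3 -> V) : \sum_k F k = F (inord 0) + F (inord 1) + F (inord 2).
Proof.
rewrite !big_ord_recr big_ord0 /= add0r.
by congr (F _ + F _ + F _); apply: val_inj; rewrite /= inordK.
Qed.
Lemma sum2 (V : nmodType) (F : 'I_2 -> V) : \sum_k F k = F (inord 0) + F (inord 1).
Proof.
rewrite !big_ord_recr big_ord0 /= add0r.
by congr (F _ + F _); apply: val_inj; rewrite /= inordK.
Qed.
Definition vx (v : 'rV[R]_3) := v ord0 (inord 0).
Definition vy (v : 'rV[R]_3) := v ord0 (inord 1).
Definition vz (v : 'rV[R]_3) := v ord0 (inord 2).
Definition ent a c v (i j : nat) : C :=
  match i, j with
  | 0, 0 => Complex (a * (1 + c * vz v)) 0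
  | 0, _ => Complex (a * c * vx v) (- (a * c * vy v))
  | _, 0 => Complex (a * c * vx v) (a * c * vy v)
  | _, _ => Complex (a * (1 - c * vz v)) 0
  end.
Lemma Mof_ent a c v (i j : 'I_2) : (cR a *: (1%:M + cR c *: dot_sigma v)) i j = ent a c v i j.
Proof.
rewrite /dot_sigma !mxE summxE sum3 /pauli !inordK //= !mxE.
case: i => [[|[|//]] Hi]; case: j => [[|[|//]] Hj]; rewrite /= /cR /cI /vx /vy /vz; simpl;
  congr Complex; ring.
Qed.
Lemma bloch_ent s (i j : 'I_2) : bloch_state s i j = ent (2^-1) 1 s i j.
Proof. by rewrite -Mof_ent /bloch_state scale1r. Qed.
Definition dot3 (u v : 'rV[R]_3) := vx u * vx v + vy u * vy v + vz u * vz v.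
Lemma trgen {A B : 'M[C]_2} {a c u a' c' v} :
  (forall i j, A i j = ent a c u i j) -> (forall i j, B i j = ent a' c' v i j) ->
  retr (A *m B) = 2 * a * a' * (1 + c * c' * dot3 u v).
Proof.
move=> hA hB.
rewrite /retr /mxtrace sum2 !mxE !sum2 !hA !hB !inordK //= /dot3.
ring.
Qed.
Lemma sqnE v : sqnorm3 v = vx v ^+ 2 + vy v ^+ 2 + vz v ^+ 2.
Proof. by rewrite /sqnorm3 sum3. Qed.
Lemma pjointE (pi : bool -> bool -> R) (s : bool -> bool -> 'rV[R]_3) (bv : bool -> 'rV[R]_3) a b x y :
  pjoint pi s bv a b x y = pi x a * (1 + @sgnb R b * dot3 (s x a) (bv y)) / 2.
Proof.
rewrite /pjoint (trgen (bloch_ent (s x a)) (Mof_ent (2^-1) (@sgnb R b) (bv y))).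
by field.
Qed.
Lemma ppassE u v : ppass (bloch_state u) (bloch_state v) = (1 + (1 + dot3 u v) / 2) / 2.
Proof.
rewrite /ppass (trgen (bloch_ent u) (bloch_ent v)). by field.
Qed.
Lemma corrEE (pi : bool -> bool -> R) (s : bool -> bool -> 'rV[R]_3) (bv : bool -> 'rV[R]_3) x y : corrE pi s bv x y =
  pi x true * dot3 (s x true) (bv y) - pi x false * dot3 (s x false) (bv y).
Proof.
rewrite /corrE.
under eq_bigr => a _ do under eq_bigr => b _ do rewrite pjointE.
rewrite !big_bool /= /sgnb. by field.
Qed.
Lemma Rt2E (pi : bool -> bool -> R) (s : bool -> bool -> 'rV[R]_3) x : Rt2 pi s x =
  (pi x true * vx (s x true) - pi x false * vx (s x false)) ^+ 2 +
  (pi x true * vy (s x true) - pi x false * vy (s x false)) ^+ 2 +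
  (pi x true * vz (s x true) - pi x false * vz (s x false)) ^+ 2.
Proof.
rewrite /Rt2 /ppur /pov !ppassE /dot3. by field.
Qed.
Lemma CS6 (u1 u2 u3 u4 u5 u6 w1 w2 w3 w4 w5 w6 : R) :
  (u1*w1 + u2*w2 + u3*w3 + u4*w4 + u5*w5 + u6*w6) ^+ 2 <=
  (u1^+2 + u2^+2 + u3^+2 + u4^+2 + u5^+2 + u6^+2) * (w1^+2 + w2^+2 + w3^+2 + w4^+2 + w5^+2 + w6^+2).
Proof.
rewrite -subr_ge0.
have -> : (u1^+2 + u2^+2 + u3^+2 + u4^+2 + u5^+2 + u6^+2) * (w1^+2 + w2^+2 + w3^+2 + w4^+2 + w5^+2 + w6^+2)
  - (u1*w1 + u2*w2 + u3*w3 + u4*w4 + u5*w5 + u6*w6) ^+ 2 =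
  (u1*w2-u2*w1)^+2 + (u1*w3-u3*w1)^+2 + (u1*w4-u4*w1)^+2 + (u1*w5-u5*w1)^+2 + (u1*w6-u6*w1)^+2
  + (u2*w3-u3*w2)^+2 + (u2*w4-u4*w2)^+2 + (u2*w5-u5*w2)^+2 + (u2*w6-u6*w2)^+2
  + (u3*w4-u4*w3)^+2 + (u3*w5-u5*w3)^+2 + (u3*w6-u6*w3)^+2
  + (u4*w5-u5*w4)^+2 + (u4*w6-u6*w4)^+2 + (u5*w6-u6*w5)^+2 by ring.
by rewrite !addr_ge0 ?sqr_ge0.
Qed.
Lemma final (S X u1 u2 u3 u4 u5 u6 w1 w2 w3 w4 w5 w6 : R) :
  S = u1*w1 + u2*w2 + u3*w3 + u4*w4 + u5*w5 + u6*w6 ->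
  X = u1^+2 + u2^+2 + u3^+2 + u4^+2 + u5^+2 + u6^+2 ->
  w1^+2 + w2^+2 + w3^+2 + w4^+2 + w5^+2 + w6^+2 = 4 ->
  S <= 2 * Num.sqrt X.
Proof.
move=> hS hX hW.
have X0 : 0 <= X by rewrite hX !addr_ge0 ?sqr_ge0.
have h := CS6 u1 u2 u3 u4 u5 u6 w1 w2 w3 w4 w5 w6.
rewrite -hS -hX hW in h.
have t0 := sqrtr_ge0 X.
have tt := sqr_sqrtr X0.
nra.
Qed.
End S.
Arguments vx {R} v. Arguments vy {R} v. Arguments vz {R} v. Arguments dot3 {R} u v. Arguments final {R}.
Theorem theorem2 (R : rcfType) (pi : bool -> bool -> R)
  (s : bool -> bool -> 'rV[R]_3) (bv : bool -> 'rV[R]_3)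
  (pi_ge0 : forall x a, 0 <= pi x a)
  (pi_sum1 : forall x, pi x true + pi x false = 1)
  (s_le1 : forall x a, sqnorm3 (s x a) <= 1)
  (bv_unit : forall y, sqnorm3 (bv y) = 1) :
  S_CHSH pi s bv <= 2 * Num.sqrt (Rt2 pi s false + Rt2 pi s true).
Proof.
have b0 := bv_unit false; have b1 := bv_unit true.
rewrite sqnE in b0; rewrite sqnE in b1.
rewrite /S_CHSH !corrEE !Rt2E.
apply: (final _ _
  (pi false true * vx (s false true) - pi false false * vx (s false false))
  (pi false true * vy (s false true) - pi false false * vy (s false false))
  (pi false true * vz (s false true) - pi false false * vz (s false false))
  (pi true true * vx (s true true) - pi true false * vx (s true false))
  (pi true true * vy (s true true) - pi true false * vy (s true false))
  (pi true true * vz (s true true) - pi true false * vz (s true false))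
  (vx (bv false) + vx (bv true))
  (vy (bv false) + vy (bv true))
  (vz (bv false) + vz (bv true))
  (vx (bv false) - vx (bv true))
  (vy (bv false) - vy (bv true))
  (vz (bv false) - vz (bv true))).
- rewrite /dot3; ring.
- ring.
- transitivity (2 * (vx (bv false) ^+ 2 + vy (bv false) ^+ 2 + vz (bv false) ^+ 2)
    + 2 * (vx (bv true) ^+ 2 + vy (bv true) ^+ 2 + vz (bv true) ^+ 2)); first by ring.
  by rewrite b0 b1; ring.
Qed.
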